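(* Let $n\ge 2$. The tropical symplectic Grassmannian $\mathrm{TSpGr}(2,2n)$ is isomorphic as a fan to $\mathbb{R}^n\times H_{n-2}\times\mathbf{T}_{2n}$, where $H_{n-2}$ denotes a generic (standard) tropical hyperplane in $\mathbb{TP}^{n-1}$ and $\mathbf{T}_{2n}$ is the space of phylogenetic trees with $2n$ labeled leaves.
   Context: $[2n]=\{1,\dots,n,\bar1,\dots,\bar n\}$. $\mathrm{TSpGr}(2,2n)$ is the tropicalization (over an algebraically closed valued field, of any characteristic; it is independent of the characteristic) of the symplectic Grassmannian of $2$-dimensional subspaces of $\mathbb{K}^{2n}$ isotropic for the standard symplectic form, in the Plücker embedding; equivalently, the set of $\mu\in\mathbb{TP}^{\binom{2n}{2}-1}$ such that for all $i<j<k<l$ in $[2n]$ the minimum of $\mu_{ij}+\mu_{kl},\mu_{ik}+\mu_{jl},\mu_{il}+\mu_{jk}$ is attained at least twice, and the minimum of $\mu_{1\bar1},\dots,\mu_{n\bar n}$ is attained at least twice. The generic tropical hyperplane $H_{n-2}\subseteq\mathbb{TP}^{n-1}$ is the fan where $\min(x_1,\dots,x_n)$ is attained at least twice. $\mathbf{T}_{2n}$ is the space of phylogenetic trees on $2n$ leaves (Billera–Holmes–Vogtmann), viewed as the fan with rays indexed by splits of the leaf set into two parts of size at least $2$ and cones indexed by sets of pairwise compatible splits. *)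

(* Defs.v *)
From HB Require Import structures.
From mathcomp Require Import all_boot all_order all_algebra.
From mathcomp Require Import reals.
Set Implicit Arguments. Unset Strict Implicit. Unset Printing Implicit Defensive.
Import Order.TTheory GRing.Theory Num.Theory.
Local Open Scope ring_scope.

(* The label set [2n] = {1,...,n, 1bar,...,nbar}, realised as 'I_(n + n):
   i (0 <= i < n) is [unbar i] = lshift n i and ibar is [bar i] = rshift n i,
   so the order 1 < ... < n < 1bar < ... < nbar is the order of 'I_(n+n). *)
Definition leaf (n : nat) := 'I_(n + n).
Definition unbar (n : nat) (i : 'I_n) : leaf n := lshift n i.
Definition bar (n : nat) (i : 'I_n) : leaf n := rshift n i.

Definition pair_pred (n : nat) (p : leaf n * leaf n) : bool := (p.1 < p.2)%N.
Definition pair (n : nat) := {p : leaf n * leaf n | pair_pred p}.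

Notation plucker_space R n := {ffun pair n -> R^o}.

(* mu_{ij} = mu_{ji} for i <> j (the value 0 for i = j is never used) *)
Definition pl (R : realType) (n : nat) (mu : plucker_space R n) (i j : leaf n) : R :=
  if @insub _ (@pair_pred n) (pair n) (i, j) is Some p then mu p
  else if @insub _ (@pair_pred n) (pair n) (j, i) is Some p then mu p else 0.

Definition min_twice (R : realType) (I : finType) (f : I -> R) : Prop :=
  exists i j : I, i != j /\ (forall k, f i <= f k) /\ (forall k, f j <= f k).

Definition min_twice3 (R : realType) (a b c : R) : Prop :=
  min_twice (fun k : 'I_3 => [:: a; b; c]`_k).

(* Points of the torus part of TP^{m-1} = R^m / R(1,...,1) are represented by
   their unique representative with coordinate sum 0 (a canonical linear
   isomorphism R^m / R1 ~ {x | sum x = 0}). *)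
Definition normalized (R : realType) (I : finType) (x : {ffun I -> R}) : Prop :=
  \sum_(i : I) x i = 0.

Definition TSpGr (R : realType) (n : nat) (mu : plucker_space R n) : Prop :=
  normalized mu /\
  (forall i j k l : leaf n, (i < j)%N -> (j < k)%N -> (k < l)%N ->
     min_twice3 (pl mu i j + pl mu k l) (pl mu i k + pl mu j l)
                (pl mu i l + pl mu j k)) /\
  min_twice (fun i : 'I_n => pl mu (unbar i) (bar i)).

Definition tropH (R : realType) (n : nat) (x : {ffun 'I_n -> R}) : Prop :=
  normalized x /\ min_twice (fun i => x i).

Definition coneH (R : realType) (n : nat) (S : {set 'I_n})
  (x : {ffun 'I_n -> R}) : Prop :=
  normalized x /\ (forall i k, i \in S -> x i <= x k).

Definition is_split (n : nat) (s : {set {set leaf n}}) : bool :=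
  [exists A : {set leaf n},
     [&& s == [set A; ~: A], (1 < #|A|)%N & (1 < #|~: A|)%N]].
Definition split (n : nat) := {s : {set {set leaf n}} | is_split s}.

Definition compatible (n : nat) (s t : split n) : bool :=
  [exists A in val s, exists B in val t, A :&: B == set0].

(* The BHV space of phylogenetic trees T_{2n}, realised as the union, inside
   R^{splits}, of the orthants R_{>=0}^sigma over pairwise compatible sets
   sigma of splits (an edge-length vector supported on sigma). *)
Definition treespace (R : realType) (n : nat) (w : {ffun split n -> R}) : Prop :=
  (forall s, 0 <= w s) /\
  (forall s t, w s != 0 -> w t != 0 -> compatible s t).

Definition pairwise_compatible (n : nat) (sigma : {set split n}) : Prop :=
  forall s t, s \in sigma -> t \in sigma -> compatible s t.

Definition coneT (R : realType) (n : nat) (sigma : {set split n})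
  (w : {ffun split n -> R}) : Prop :=
  forall s, 0 <= w s /\ (s \notin sigma -> w s = 0).

(* The product fan R^n x H_{n-2} x T_{2n}, in the vector space
   R^n x (R^n/R1) x R^{splits}. *)
Notation prod_space R n :=
  ({ffun 'I_n -> R^o} * {ffun 'I_n -> R^o} * {ffun split n -> R^o})%type.

Definition prod_support (R : realType) (n : nat) (d : prod_space R n) : Prop :=
  tropH d.1.2 /\ treespace d.2.

Definition prod_cone (R : realType) (n : nat) (S : {set 'I_n})
  (sigma : {set split n}) (d : prod_space R n) : Prop :=
  coneH S d.1.2 /\ coneT sigma d.2.

(* A fan isomorphism from the product fan onto TSpGr(2,2n): a bijection from
   the support of the product fan onto TSpGr(2,2n) which is linear on every
   cone of the product fan (the images of the cones then form a fan structure
   on TSpGr(2,2n) isomorphic to the product fan). *)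
Definition fan_iso_onto_TSpGr (R : realType) (n : nat)
  (Phi : prod_space R n -> plucker_space R n) : Prop :=
  (forall d, prod_support d -> TSpGr (Phi d)) /\
  (forall mu, TSpGr mu -> exists d, prod_support d /\ Phi d = mu) /\
  (forall d e, prod_support d -> prod_support e -> Phi d = Phi e -> d = e) /\
  (forall (S : {set 'I_n}) (sigma : {set split n}),
     (1 < #|S|)%N -> pairwise_compatible sigma ->
     exists L : {linear prod_space R n -> plucker_space R n},
       forall d, prod_cone S sigma d -> Phi d = L d).

(* Main.v *)
Require Import Defs.
From HB Require Import structures.
From mathcomp Require Import all_boot all_order all_algebra.
From mathcomp Require Import reals boolp.
From mathcomp.algebra_tactics Require Import ring lra.
From mathcomp Require Import zify.
Set Implicit Arguments. Unset Strict Implicit. Unset Printing Implicit Defensive.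
Import Order.TTheory GRing.Theory Num.Theory.
Local Open Scope ring_scope.
Section Splits.
Variable n : nat.
Implicit Types s t : Defs.split n.
Local Notation L := (leaf n).

Lemma splitP' (s : Defs.split n) : exists A : {set L},
  [&& val s == [set A; ~:A], (1 < #|A|)%N & (1 < #|~: A|)%N].
Proof. exact/existsP/(valP s). Qed.

Definition side (s : Defs.split n) : {set L} := xchoose (splitP' s).

Lemma sideP s : [/\ val s = [set side s; ~: side s], (1 < #|side s|)%N
  & (1 < #|~: side s|)%N].
Proof. by case/and3P: (xchooseP (splitP' s)) => /eqP. Qed.

Lemma in_val s B : (B \in val s) = (B == side s) || (B == ~: side s).
Proof. by case: (sideP s) => -> _ _; rewrite !inE. Qed.

Definition sep (s : Defs.split n) (i j : L) : bool :=
  [exists A in val s, (i \in A) && (j \notin A)].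

Lemma sepE s i j : sep s i j = ((i \in side s) != (j \in side s)).
Proof.
rewrite /sep; apply/existsP/idP.
- case=> A /andP[]; rewrite in_val => /orP[]/eqP->; rewrite ?inE;
    by case: (i \in side s); case: (j \in side s).
- move=> H; case Hi: (i \in side s).
  + exists (side s); rewrite in_val eqxx Hi /=.
    by move: H; rewrite Hi; case: (j \in side s).
  + exists (~: side s); rewrite in_val eqxx orbT !inE Hi /=.
    by move: H; rewrite Hi; case: (j \in side s).
Qed.

Lemma sep_sym s i j : sep s i j = sep s j i.
Proof. by rewrite !sepE eq_sym. Qed.

Lemma sepii s i : sep s i i = false.
Proof. by rewrite sepE eqxx. Qed.

Lemma split_eq s t : val t = [set side s; ~: side s] -> t = s.
Proof. by move=> h; apply: val_inj; rewrite h; case: (sideP s). Qed.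

Lemma split_eq_side s t : side t = side s \/ side t = ~: side s -> t = s.
Proof.
case: (sideP t) => ht _ _ [e|e]; apply: split_eq; rewrite ht e //.
by rewrite setCK setUC.
Qed.

Lemma compat_sides s t : compatible s t ->
  [\/ side s :&: side t = set0, side s :&: ~: side t = set0,
      ~: side s :&: side t = set0 | ~: side s :&: ~: side t = set0].
Proof.
case/existsP=> A /andP[]; rewrite in_val => hA /existsP[B /andP[]].
rewrite in_val => hB /eqP e.
by case/orP: hA => /eqP eA; case/orP: hB => /eqP eB; subst A B;
  [constructor 1|constructor 2|constructor 3|constructor 4].
Qed.

Lemma compat_of s t :
  [\/ side s :&: side t = set0, side s :&: ~: side t = set0,
      ~: side s :&: side t = set0 | ~: side s :&: ~: side t = set0] ->
  compatible s t.
Proof.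
move=> h; apply/existsP.
case: h => e.
- by exists (side s); rewrite in_val eqxx /=; apply/existsP; exists (side t);
     rewrite in_val eqxx e /=.
- by exists (side s); rewrite in_val eqxx /=; apply/existsP; exists (~: side t);
     rewrite in_val eqxx orbT e /=.
- by exists (~: side s); rewrite in_val eqxx orbT /=; apply/existsP;
     exists (side t); rewrite in_val eqxx e /=.
- by exists (~: side s); rewrite in_val eqxx orbT /=; apply/existsP;
     exists (~: side t); rewrite in_val eqxx orbT e /=.
Qed.

Lemma set0_mem (A B : {set L}) x : A :&: B = set0 -> ~~ ((x \in A) && (x \in B)).
Proof. by move=> e; rewrite -in_setI e inE. Qed.

End Splits.
Section Bools.
Variables x1 x2 x3 x4 : bool.
Definition E1 := ((x1 != x2) + (x3 != x4))%N.
Definition E2 := ((x1 != x3) + (x2 != x4))%N.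
Definition E3 := ((x1 != x4) + (x2 != x3))%N.
Definition P12 := [&& x1 == x2, x3 == x4 & x1 != x3].
Definition P13 := [&& x1 == x3, x2 == x4 & x1 != x2].
Definition P14 := [&& x1 == x4, x2 == x3 & x1 != x2].
Ltac bf := rewrite /E1 /E2 /E3 /P12 /P13 /P14;
  move: x1 x2 x3 x4; do 4 case.

Lemma bB1 : ~~ P13 -> ~~ P14 -> E2 = E3 /\ (E1 <= E2)%N.
Proof. by bf. Qed.
Lemma bB2 : ~~ P12 -> ~~ P14 -> E1 = E3 /\ (E2 <= E1)%N.
Proof. by bf. Qed.
Lemma bB3 : ~~ P12 -> ~~ P13 -> E1 = E2 /\ (E3 <= E1)%N.
Proof. by bf. Qed.
Lemma bB0 : ~~ P12 -> ~~ P13 -> ~~ P14 -> E1 = E2.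
Proof. by bf. Qed.
Lemma bP12 : P12 -> E2 = 2%N /\ E1 = 0%N.
Proof. by bf. Qed.
End Bools.

Section BoolsC.
Variables x1 x2 x3 x4 y1 y2 y3 y4 : bool.
Definition cmpb := [|| [&& ~~(x1&&y1), ~~(x2&&y2), ~~(x3&&y3) & ~~(x4&&y4)],
  [&& ~~(x1&&~~y1), ~~(x2&&~~y2), ~~(x3&&~~y3) & ~~(x4&&~~y4)],
  [&& ~~(~~x1&&y1), ~~(~~x2&&y2), ~~(~~x3&&y3) & ~~(~~x4&&y4)] |
  [&& ~~(~~x1&&~~y1), ~~(~~x2&&~~y2), ~~(~~x3&&~~y3) & ~~(~~x4&&~~y4)]].
Ltac bf := rewrite /E1 /E2 /E3 /P12 /P13 /P14 /cmpb;
  move: x1 x2 x3 x4 y1 y2 y3 y4; do 8 case.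
Lemma bC : cmpb ->
  [/\ P12 x1 x2 x3 x4 -> ~~ P13 y1 y2 y3 y4 && ~~ P14 y1 y2 y3 y4,
      P13 x1 x2 x3 x4 -> ~~ P12 y1 y2 y3 y4 && ~~ P14 y1 y2 y3 y4 &
      P14 x1 x2 x3 x4 -> ~~ P12 y1 y2 y3 y4 && ~~ P13 y1 y2 y3 y4].
Proof. by bf. Qed.
End BoolsC.
Section Quad.
Variable R : realType.
Variable n : nat.
Local Notation L := (leaf n).
Implicit Types s t u : Defs.split n.

Definition dist (w : {ffun Defs.split n -> R}) (i j : L) : R :=
  \sum_(s | sep s i j) w s.

Lemma distE w i j : dist w i j = \sum_s w s * (sep s i j)%:R.
Proof. by rewrite /dist big_mkcond; apply: eq_bigr => s _; case: ifP; rewrite ?mulr1 ?mulr0. Qed.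

Lemma dist_sym w i j : dist w i j = dist w j i.
Proof. by rewrite /dist; apply: eq_bigl => s; rewrite sep_sym. Qed.

Lemma distii w i : dist w i i = 0.
Proof. by rewrite /dist big_pred0 // => s; rewrite sepii. Qed.

Variable w : {ffun Defs.split n -> R}.
Hypothesis hw0 : forall s, 0 <= w s.
Hypothesis hwc : forall s t, w s != 0 -> w t != 0 -> compatible s t.
Variables i j k l : L.

Definition bi s := i \in side s.
Definition bj s := j \in side s.
Definition bk s := k \in side s.
Definition bl s := l \in side s.
Definition e1 s := E1 (bi s) (bj s) (bk s) (bl s).
Definition e2 s := E2 (bi s) (bj s) (bk s) (bl s).
Definition e3 s := E3 (bi s) (bj s) (bk s) (bl s).
Definition p12 s := P12 (bi s) (bj s) (bk s) (bl s).
Definition p13 s := P13 (bi s) (bj s) (bk s) (bl s).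
Definition p14 s := P14 (bi s) (bj s) (bk s) (bl s).

Definition v1 := dist w i j + dist w k l.
Definition v2 := dist w i k + dist w j l.
Definition v3 := dist w i l + dist w j k.

Lemma sum2 a b c d : dist w a b + dist w c d =
  \sum_s w s * ((sep s a b) + (sep s c d))%N%:R.
Proof.
rewrite !distE -big_split /=; apply: eq_bigr => s _.
by rewrite natrD mulrDr.
Qed.

Lemma v1E : v1 = \sum_s w s * (e1 s)%:R.
Proof. by rewrite /v1 sum2; apply: eq_bigr => s _; rewrite !sepE. Qed.
Lemma v2E : v2 = \sum_s w s * (e2 s)%:R.
Proof. by rewrite /v2 sum2; apply: eq_bigr => s _; rewrite !sepE. Qed.
Lemma v3E : v3 = \sum_s w s * (e3 s)%:R.
Proof. by rewrite /v3 sum2; apply: eq_bigr => s _; rewrite !sepE. Qed.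

Lemma cmp_pts s t : compatible s t ->
  cmpb (bi s) (bj s) (bk s) (bl s) (bi t) (bj t) (bk t) (bl t).
Proof.
rewrite /cmpb /bi /bj /bk /bl.
case/compat_sides => e; have h x := set0_mem x e;
  move: (h i) (h j) (h k) (h l); rewrite ?inE => -> -> -> ->; by rewrite ?orbT.
Qed.

Lemma sum_eq (f g : Defs.split n -> nat) :
  (forall t, w t != 0 -> f t = g t) ->
  \sum_s w s * (f s)%:R = \sum_s w s * (g s)%:R.
Proof.
move=> h; apply: eq_bigr => s _; have [->|/h ->] := eqVneq (w s) 0.
  by rewrite !mul0r.
by [].
Qed.

Lemma sum_le (f g : Defs.split n -> nat) :
  (forall t, w t != 0 -> (f t <= g t)%N) ->
  \sum_s w s * (f s)%:R <= \sum_s w s * (g s)%:R.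
Proof.
move=> h; apply: ler_sum => s _; have [->|/h le] := eqVneq (w s) 0.
  by rewrite !mul0r.
by apply: ler_wpM2l => //; rewrite ler_nat.
Qed.

Lemma case1 : (forall t, w t != 0 -> ~~ p13 t && ~~ p14 t) -> v2 = v3 /\ v1 <= v2.
Proof.
move=> h; rewrite v1E v2E v3E; split.
  by apply: sum_eq => t /h /andP[a b]; case: (bB1 a b).
by apply: sum_le => t /h /andP[a b]; case: (bB1 a b).
Qed.

Lemma case2 : (forall t, w t != 0 -> ~~ p12 t && ~~ p14 t) -> v1 = v3 /\ v2 <= v1.
Proof.
move=> h; rewrite v1E v2E v3E; split.
  by apply: sum_eq => t /h /andP[a b]; case: (bB2 a b).
by apply: sum_le => t /h /andP[a b]; case: (bB2 a b).
Qed.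

Lemma case3 : (forall t, w t != 0 -> ~~ p12 t && ~~ p13 t) -> v1 = v2 /\ v3 <= v1.
Proof.
move=> h; rewrite v1E v2E v3E; split.
  by apply: sum_eq => t /h /andP[a b]; case: (bB3 a b).
by apply: sum_le => t /h /andP[a b]; case: (bB3 a b).
Qed.

Lemma from12 s : w s != 0 -> p12 s -> forall t, w t != 0 -> ~~ p13 t && ~~ p14 t.
Proof. by move=> ws p t wt; case: (bC (cmp_pts (hwc ws wt))) => /(_ p). Qed.
Lemma from13 s : w s != 0 -> p13 s -> forall t, w t != 0 -> ~~ p12 t && ~~ p14 t.
Proof. by move=> ws p t wt; case: (bC (cmp_pts (hwc ws wt))) => _ /(_ p). Qed.
Lemma from14 s : w s != 0 -> p14 s -> forall t, w t != 0 -> ~~ p12 t && ~~ p13 t.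
Proof. by move=> ws p t wt; case: (bC (cmp_pts (hwc ws wt))) => _ _ /(_ p). Qed.

Lemma four_point :
  [\/ v2 = v3 /\ v1 <= v2, v1 = v3 /\ v2 <= v1 | v1 = v2 /\ v3 <= v1].
Proof.
have [/existsP[s /andP[ws ps]]|no13] := boolP [exists s, (w s != 0) && p13 s].
  by constructor 2; apply: case2; exact: from13 ws ps.
have [/existsP[s /andP[ws ps]]|no14] := boolP [exists s, (w s != 0) && p14 s].
  by constructor 3; apply: case3; exact: from14 ws ps.
constructor 1; apply: case1 => t wt; apply/andP; split.
  by apply: contra no13 => pt; apply/existsP; exists t; rewrite wt.
by apply: contra no14 => pt; apply/existsP; exists t; rewrite wt.
Qed.

Lemma q_lower s : w s != 0 -> p12 s -> 2 * w s <= v2 - v1.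
Proof.
move=> ws ps; have h := from12 ws ps.
rewrite v1E v2E -sumrB (bigD1 s) //=.
case: (bP12 ps); rewrite -/(e2 s) -/(e1 s) => -> ->.
rewrite mulr0 subr0 mulrC lerDl; apply: sumr_ge0 => t _.
rewrite -mulrBr; have [->|/h /andP[a b]] := eqVneq (w t) 0; first by rewrite mul0r.
by apply: mulr_ge0 => //; rewrite subr_ge0 ler_nat; case: (bB1 a b).
Qed.

Lemma q_neg t : w t != 0 -> p13 t -> v2 <= v1.
Proof. by move=> wt pt; case: (case2 (from13 wt pt)). Qed.

Lemma q_exact s : p12 s ->
  (forall t, w t != 0 -> t != s -> [&& ~~ p12 t, ~~ p13 t & ~~ p14 t]) ->
  v2 - v1 = 2 * w s.
Proof.
move=> ps h; rewrite v1E v2E -sumrB (bigD1 s) //=.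
case: (bP12 ps); rewrite -/(e2 s) -/(e1 s) => -> ->.
rewrite mulr0 subr0 mulrC big1 ?addr0 // => t ts.
rewrite -mulrBr; have [->|/h/(_ ts)/and3P[a b c]] := eqVneq (w t) 0; first by rewrite mul0r.
by rewrite /e1 /e2 (bB0 a b c) subrr mulr0.
Qed.

End Quad.
Section Uniq.
Variable R : realType.
Variable n : nat.
Local Notation L := (leaf n).
Implicit Types s t u : Defs.split n.

Lemma in_valC t X : X \in val t -> ~: X \in val t.
Proof. by rewrite !in_val => /orP[]/eqP->; rewrite ?setCK eqxx ?orbT. Qed.

Lemma val_side_eq s t X : X \in val t -> X = side s -> t = s.
Proof.
rewrite in_val => /orP[]/eqP-> e; apply: split_eq_side; first by left.
by right; rewrite -e setCK.
Qed.

Lemma compat_sets s t X Y : compatible s t -> X \in val s -> Y \in val t ->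
  [\/ X :&: Y = set0, X :&: ~: Y = set0, ~: X :&: Y = set0 | ~: X :&: ~: Y = set0].
Proof.
move=> c; rewrite !in_val => /orP[]/eqP-> /orP[]/eqP->;
  case: (compat_sides c) => e; rewrite ?setCK;
  first [by apply: Or41 | by apply: Or42 | by apply: Or43 | by apply: Or44].
Qed.

Lemma emptyP (X Y : {set L}) : X :&: Y = set0 -> forall x, x \in X -> x \notin Y.
Proof. by move=> e x hx; apply/negP => hy; move: (set0_mem x e); rewrite hx hy. Qed.

Variable w : {ffun Defs.split n -> R}.
Hypothesis hw0 : forall s, 0 <= w s.
Hypothesis hwc : forall s t, w s != 0 -> w t != 0 -> compatible s t.

Lemma pick_pair (A : {set L}) : (1 < #|A|)%N -> (exists z, z \notin A) ->
  exists a1 a2, [/\ a1 \in A, a2 \in A, a1 != a2 &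
    forall t, w t != 0 -> forall C, C \in val t -> C \proper A ->
      ~~ ((a1 \in C) && (a2 \in C))].
Proof.
move=> cA [z zA].
have [a1 Ha1] : exists a1, a1 \in A by apply/card_gt0P; apply: ltn_trans cA.
pose F := [set C : {set L} | [&& [exists t, (w t != 0) && (C \in val t)],
   C \proper A & a1 \in C]].
have inF t C : w t != 0 -> C \in val t -> C \proper A -> a1 \in C -> C \in F.
  move=> wt Ct CA a1C; rewrite inE CA a1C !andbT; apply/existsP; exists t.
  by rewrite wt.
case: (set_0Vmem F) => [F0 | [C0 HC0]].
  have : (0 < #|A :\ a1|)%N by rewrite (cardsD1 a1) Ha1 in cA.
  case/card_gt0P => a2; rewrite !inE => /andP[a21 a2A].
  exists a1, a2; split => //; first by rewrite eq_sym.
  move=> t wt C Ct CA; apply/negP => /andP[a1C _].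
  by move: (inF t C wt Ct CA a1C); rewrite F0 inE.
case: (arg_maxnP (fun C : {set L} => #|C|) HC0) => Cs HCs Hmax.
have HCs2 : Cs \in F := HCs.
move: HCs2; rewrite inE => /and3P[/existsP[ts /andP[wts Cts]] CsA a1Cs].
have : (0 < #|A :\: Cs|)%N.
  move: CsA; rewrite properEcard => /andP[sub lt].
  by rewrite cardsD (setIidPr sub) subn_gt0.
case/card_gt0P => a2; rewrite !inE => /andP[a2Cs a2A].
have a12 : a1 != a2 by apply: contraNneq a2Cs => <-.
exists a1, a2; split => //.
move=> t wt C Ct CA; apply/negP => /andP[a1C a2C].
have CF := inF t C wt Ct CA a1C.
have le := Hmax C CF.
case: (compat_sets (hwc wts wt) Cts Ct) => e.
- by move: (emptyP e a1Cs); rewrite a1C.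
- have sub : Cs \subset C.
    apply/subsetP => x xCs; move: (emptyP e xCs); by rewrite inE negbK.
  have : Cs \proper C by rewrite properEneq sub andbT; apply: contraNneq a2Cs => ->.
  by move=> /proper_card lt; move: le; rewrite /= leqNgt lt.
- have : a2 \in ~: Cs by rewrite inE.
  by move/(emptyP e); rewrite a2C.
- have zC : z \in ~: Cs.
    by rewrite inE; apply: contra zA; apply/subsetP/proper_sub.
  move: (emptyP e zC); rewrite inE negbK => zC'.
  by move: zA; rewrite (subsetP (proper_sub CA)).
Qed.

Lemma quartet_exact s : (forall t, w t != 0 -> compatible s t) ->
  exists a1 a2 b1 b2, [/\ a1 \in side s, a2 \in side s, b1 \notin side s &
    b2 \notin side s] /\ [/\ a1 != a2, b1 != b2 &
    v2 w a1 a2 b1 b2 - v1 w a1 a2 b1 b2 = 2 * w s].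
Proof.
move=> hc; case: (sideP s) => vs cA cAc.
have [a0 a0A] : exists a, a \in side s by apply/card_gt0P; apply: ltn_trans cA.
have [z zA] : exists z, z \in ~: side s by apply/card_gt0P; apply: ltn_trans cAc.
move: zA; rewrite inE => zA.
have [a1 [a2 [a1A a2A a12 pa]]] := pick_pair cA (ex_intro _ z zA).
have [b1 [b2 [b1A b2A b12 pb]]] : exists b1 b2, [/\ b1 \in ~: side s,
   b2 \in ~: side s, b1 != b2 & forall t, w t != 0 -> forall C, C \in val t ->
   C \proper ~: side s -> ~~ ((b1 \in C) && (b2 \in C))].
  by apply: pick_pair cAc _; exists a0; rewrite inE negbK.
move: b1A b2A; rewrite !inE => b1A b2A.
exists a1, a2, b1, b2; split; first by [].
split => //.
have ps : p12 a1 a2 b1 b2 s.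
  by rewrite /p12 /P12 /bi /bj /bk /bl a1A a2A (negbTE b1A) (negbTE b2A).
apply: q_exact => // t wt ts.
have [h13 h14] : ~~ p13 a1 a2 b1 b2 t /\ ~~ p14 a1 a2 b1 b2 t.
  by case: (bC (cmp_pts a1 a2 b1 b2 (hc t wt))) => /(_ ps)/andP.
rewrite h13 h14 !andbT; apply/negP => pt.
pose X := if a1 \in side t then side t else ~: side t.
have Xt : X \in val t by rewrite /X; case: ifP; rewrite in_val eqxx ?orbT.
move: pt; rewrite /p12 /P12 /bi /bj /bk /bl => /and3P[/eqP e12 /eqP e34 d13].
have [a1X a2X b1X b2X] : [/\ a1 \in X, a2 \in X, b1 \notin X & b2 \notin X].
  rewrite /X; case: ifP => h; rewrite ?inE -e12 -e34 h;
    move: d13; rewrite h; by case: (b1 \in side t).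
have sA : side s \in val s by rewrite in_val eqxx.
case: (compat_sets (hc t wt) sA Xt) => e.
- by move: (emptyP e a1A); rewrite a1X.
- have sub : side s \subset X.
    by apply/subsetP => x xA; move: (emptyP e xA); rewrite inE negbK.
  have CX := in_valC Xt.
  have : ~: X \proper ~: side s.
    rewrite properEneq; apply/andP; split; last by rewrite setCS.
    apply/negP => /eqP e'.
    have ets : t = s by apply: (val_side_eq Xt); rewrite -[X]setCK e' setCK.
    by rewrite ets eqxx in ts.
  move/(pb t wt _ CX); by rewrite !inE b1X b2X.
- have e' : X :&: ~: side s = set0 by rewrite setIC.
  have sub : X \subset side s.
    by apply/subsetP => x xX; move: (emptyP e' xX); rewrite inE negbK.
  have : X \proper side s.
    rewrite properEneq sub andbT; apply/negP => /eqP e2.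
    have ets : t = s by apply: (val_side_eq Xt).
    by rewrite ets eqxx in ts.
  by move/(pa t wt _ Xt); rewrite a1X a2X.
- have : b1 \in ~: side s by rewrite inE.
  by move/(emptyP e); rewrite inE b1X.
Qed.

Lemma quartet_neg s t : w t != 0 -> ~~ compatible s t ->
  exists a1 a2 b1 b2, [/\ a1 \in side s, a2 \in side s, b1 \notin side s &
    b2 \notin side s] /\ [/\ a1 != a2, b1 != b2 &
    v2 w a1 a2 b1 b2 - v1 w a1 a2 b1 b2 <= 0].
Proof.
move=> wt nc.
have [a1] : exists x, x \in side s :&: side t.
  by apply/set0Pn; apply: contra nc => /eqP e; apply: compat_of; constructor 1.
have [a2] : exists x, x \in side s :&: ~: side t.
  by apply/set0Pn; apply: contra nc => /eqP e; apply: compat_of; constructor 2.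
have [b1] : exists x, x \in ~: side s :&: side t.
  by apply/set0Pn; apply: contra nc => /eqP e; apply: compat_of; constructor 3.
have [b2] : exists x, x \in ~: side s :&: ~: side t.
  by apply/set0Pn; apply: contra nc => /eqP e; apply: compat_of; constructor 4.
rewrite !inE => /andP[b2s b2t] /andP[b1s b1t] /andP[a2s a2t] /andP[a1s a1t].
exists a1, a2, b1, b2; split; first by [].
split.
- by apply: contraNneq a2t => <-.
- by apply: contraNneq b2t => <-.
have pt : p13 a1 a2 b1 b2 t.
  by rewrite /p13 /P13 /bi /bj /bk /bl a1t b1t (negbTE a2t) (negbTE b2t).
by rewrite subr_le0; exact: (q_neg hw0 hwc wt pt).
Qed.

Lemma quartet_lower s a1 a2 b1 b2 : w s != 0 -> a1 \in side s -> a2 \in side s ->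
  b1 \notin side s -> b2 \notin side s ->
  2 * w s <= v2 w a1 a2 b1 b2 - v1 w a1 a2 b1 b2.
Proof.
move=> ws a1s a2s b1s b2s; apply: (q_lower hw0 hwc ws).
by rewrite /p12 /P12 /bi /bj /bk /bl a1s a2s (negbTE b1s) (negbTE b2s).
Qed.

End Uniq.

Section Uniq2.
Variable R : realType.
Variable n : nat.
Local Notation L := (leaf n).
Implicit Types s t u : Defs.split n.
Variables w w' : {ffun Defs.split n -> R}.
Hypothesis hw0 : forall s, 0 <= w s.
Hypothesis hwc : forall s t, w s != 0 -> w t != 0 -> compatible s t.
Hypothesis hw0' : forall s, 0 <= w' s.
Hypothesis hwc' : forall s t, w' s != 0 -> w' t != 0 -> compatible s t.
Hypothesis hD : forall a1 a2 b1 b2 : L, a1 != a2 -> b1 != b2 -> a1 != b1 ->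
  a1 != b2 -> a2 != b1 -> a2 != b2 ->
  v2 w a1 a2 b1 b2 - v1 w a1 a2 b1 b2 = v2 w' a1 a2 b1 b2 - v1 w' a1 a2 b1 b2.

Lemma le_one s : w' s <= w s.
Proof.
have [->|w's] := eqVneq (w' s) 0; first exact: hw0.
have dab a b : a \in side s -> b \notin side s -> a != b.
  by move=> ha; apply: contraNneq => <-.
have w'pos : 0 < w' s by rewrite lt_def w's hw0'.
have [/forallP hc|] := boolP [forall t, (w t != 0) ==> compatible s t].
  have [a1 [a2 [b1 [b2 [[a1s a2s b1s b2s] [a12 b12 e]]]]]] :=
    quartet_exact hwc (fun t wt => implyP (hc t) wt).
  have := quartet_lower hw0' hwc' w's a1s a2s b1s b2s.
  have := dab _ _ a1s b1s; have := dab _ _ a1s b2s.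
  have := dab _ _ a2s b1s; have := dab _ _ a2s b2s => d1 d2 d3 d4.
  by rewrite -hD // e ler_pM2l.
rewrite negb_forall => /existsP[t]; rewrite negb_imply => /andP[wt nc].
have [a1 [a2 [b1 [b2 [[a1s a2s b1s b2s] [a12 b12 e]]]]]] := quartet_neg hw0 hwc wt nc.
have := quartet_lower hw0' hwc' w's a1s a2s b1s b2s.
have := dab _ _ a1s b1s; have := dab _ _ a1s b2s.
have := dab _ _ a2s b1s; have := dab _ _ a2s b2s => d1 d2 d3 d4.
rewrite -hD // => h; have := le_trans h e.
by rewrite pmulr_rle0 // leNgt w'pos.
Qed.

End Uniq2.

Lemma w_unique (R : realType) (n : nat) (w w' : {ffun Defs.split n -> R}) :
  (forall s, 0 <= w s) -> (forall s t, w s != 0 -> w t != 0 -> compatible s t) ->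
  (forall s, 0 <= w' s) -> (forall s t, w' s != 0 -> w' t != 0 -> compatible s t) ->
  (forall a1 a2 b1 b2 : leaf n, a1 != a2 -> b1 != b2 -> a1 != b1 ->
  a1 != b2 -> a2 != b1 -> a2 != b2 ->
  v2 w a1 a2 b1 b2 - v1 w a1 a2 b1 b2 = v2 w' a1 a2 b1 b2 - v1 w' a1 a2 b1 b2) ->
  w = w'.
Proof.
move=> h1 h2 h3 h4 hD; apply/ffunP => s; apply/le_anti/andP; split.
  apply: (le_one h3 h4 h1 h2) => a1 a2 b1 b2 *; symmetry; exact: hD.
exact: (le_one h1 h2 h3 h4 hD).
Qed.
Lemma sum_neq0 (R : realType) (I : finType) (P : pred I) (F : I -> R) :
  \sum_(i | P i) F i != 0 -> exists i, P i && (F i != 0).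
Proof.
move=> h; apply/existsP; apply: contraR h => /existsPn h.
rewrite big1 // => i Pi; by move: (h i); rewrite Pi /= negbK => /eqP.
Qed.

Section Ultra.
Variable R : realType.
Variable T : finType.
Variable U : T -> T -> R.
Hypothesis Usym : forall i j, U i j = U j i.

Definition ultra (Y : {set T}) := forall i j k, i \in Y -> j \in Y -> k \in Y ->
  i != j -> j != k -> i != k -> Num.min (U i k) (U j k) <= U i j.

Definition rep_ok (Y : {set T}) (m : R) (W : {set T} -> R) :=
  [/\ (forall C : {set T}, 0 <= W C),
      (forall C : {set T}, W C != 0 -> [/\ C \subset Y, C != Y & (1 < #|C|)%N]),
      (forall C D : {set T}, W C != 0 -> W D != 0 ->
          [|| [disjoint C & D], C \subset D | D \subset C]),
      (exists i j, [/\ i \in Y, j \in Y, i != j & U i j = m]) &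
      (forall i j, i \in Y -> j \in Y -> i != j ->
          U i j = m + \sum_(C : {set T} | (i \in C) && (j \in C)) W C)].

Lemma ultra_sub (Y Z : {set T}) : Z \subset Y -> ultra Y -> ultra Z.
Proof.
move=> /subsetP ZY uY i j k iZ jZ kZ; apply: uY; exact: ZY.
Qed.

Lemma ultra_rep (Y : {set T}) : ultra Y -> (1 < #|Y|)%N -> exists m W, rep_ok Y m W.
Proof.
move: {2}#|Y|.+1 (ltnSn #|Y|) => N; elim: N Y => // N IH Y ltY uY cY.
have [p0 Pp0] : exists p : T * T, [&& p.1 \in Y, p.2 \in Y & p.1 != p.2].
  by case/card_gt1P: cY => x [y [hx hy xy]]; exists (x, y); rewrite /= hx hy xy.
case: (@arg_minP _ _ _ p0 (fun p : T * T => [&& p.1 \in Y, p.2 \in Y & p.1 != p.2]) (fun p : T * T => U p.1 p.2) Pp0) => [[p q]] /= /and3P[pY qY pq] pmin.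
set m := U p q.
have mle i j : i \in Y -> j \in Y -> i != j -> m <= U i j.
  by move=> iY jY ij; apply: (pmin (i, j)); rewrite /= iY jY ij.
pose K i := [set k in Y | (k == i) || (m < U i k)].
have KY i : K i \subset Y by apply/subsetP => k; rewrite inE => /andP[].
have Kself i : i \in Y -> i \in K i by move=> iY; rewrite /K inE iY eqxx.
have Ksym i j : i \in Y -> j \in Y -> (j \in K i) = (i \in K j).
  by move=> iY jY; rewrite /K !inE iY jY eq_sym Usym.
have Ktrans i j k : i \in Y -> j \in Y -> k \in Y -> j \in K i -> k \in K j -> k \in K i.
  move=> iY jY kY; rewrite /K !inE jY kY /=.
  have [->|ki] := eqVneq k i; first by [].
  have [->|ji] := eqVneq j i; first by move=> _; rewrite (negbTE ki) /= => ->.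
  have [->|kj] := eqVneq k j; first by move=> h _.
  move=> /= h1 h2; have := uY i k j iY kY jY; rewrite eq_sym ki kj eq_sym ji.
  move=> /(_ isT isT isT) h; apply: lt_le_trans h.
  by rewrite lt_min h1 Usym h2.
have Keq i j : i \in Y -> j \in Y -> j \in K i -> K i = K j.
  move=> iY jY jK; apply/setP => k; apply/idP/idP => kK.
  - have kY : k \in Y by apply: (subsetP (KY i)).
    by apply: (Ktrans j i k) => //; rewrite -Ksym.
  - have kY : k \in Y by apply: (subsetP (KY j)).
    exact: (Ktrans i j k).
have KneY i : i \in Y -> K i != Y.
  move=> iY; apply/negP => /eqP e.
  have pK : p \in K i by rewrite e.
  have qK : q \in K i by rewrite e.
  rewrite (Keq i p) // inE qY /= (negbTE (_ : q != p)) /= in qK.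
    by rewrite /m lt_irreflexive in qK.
  by rewrite eq_sym.
have cardK i : i \in Y -> (#|K i| < #|Y|)%N.
  by move=> iY; apply: proper_card; rewrite properEneq KneY // KY.
have memK i C : i \in Y -> C \in K @: Y -> i \in C -> C = K i.
  move=> iY /imsetP[j jY ->] iK; exact: Keq.
have H C : exists mW : R * ({set T} -> R),
    (C \in K @: Y) && (1 < #|C|)%N -> rep_ok C mW.1 mW.2.
  case: (boolP ((C \in K @: Y) && (1 < #|C|)%N)) => [/andP[CP cC] | _];
    last by exists (0, fun _ => 0).
  case/imsetP: (CP) => i iY eC.
  have ltC : (#|C| < N)%N by rewrite eC; apply: leq_trans (cardK i iY) _.
  have CY : C \subset Y by rewrite eC.
  have [m' [W' ok]] := IH C ltC (ultra_sub CY uY) cC.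
  by exists (m', W').
case: (choice H) => f Hf.
pose mK C := (f C).1.
pose WK C := (f C).2.
have okC C : C \in K @: Y -> (1 < #|C|)%N -> rep_ok C (mK C) (WK C).
  by move=> CP cC; apply: Hf; rewrite CP cC.
have CsubY C : C \in K @: Y -> C \subset Y.
  by case/imsetP=> i _ ->.
have mlt C : C \in K @: Y -> (1 < #|C|)%N -> m < mK C.
  move=> CP cC; case: (okC C CP cC) => _ _ _ [i [j [iC jC ij <-]]] _.
  have iY : i \in Y by apply: (subsetP (CsubY C CP)).
  have jY : j \in Y by apply: (subsetP (CsubY C CP)).
  move: jC; rewrite (memK i C iY CP iC) /K inE jY /= eq_sym (negbTE ij) /=.
  done.
pose W D := \sum_(C in K @: Y | (1 < #|C|)%N)
   (WK C D + (D == C)%:R * (mK C - m)).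
have Wge0 D : 0 <= W D.
  apply: sumr_ge0 => C /andP[CP cC]; case: (okC C CP cC) => h0 _ _ _ _.
  apply: addr_ge0 => //; apply: mulr_ge0 => //.
  by rewrite subr_ge0 ltW // mlt.
have src D : W D != 0 -> exists C, [/\ C \in K @: Y, (1 < #|C|)%N,
    D \subset C & (WK C D != 0 \/ D = C)].
  case/sum_neq0 => C /andP[/andP[CP cC] h]; exists C; split => //.
    have [->|DC] := eqVneq D C; first by [].
    rewrite (negbTE DC) mul0r addr0 in h.
    by case: (okC C CP cC) => _ /(_ D h) [].
  have [->|DC] := eqVneq D C; first by right.
  by left; rewrite (negbTE DC) mul0r addr0 in h.
have disjK C1 C2 : C1 \in K @: Y -> C2 \in K @: Y -> C1 != C2 ->
    forall x, x \in C1 -> x \notin C2.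
  move=> C1P C2P ne x x1; apply/negP => x2.
  have xY : x \in Y by apply: (subsetP (CsubY C1 C1P)).
  by move/negP: ne; apply; rewrite (memK x C1) // (memK x C2).
exists m, W; split.
- exact: Wge0.
- move=> D /src [C [CP cC DC h]]; have CY := CsubY C CP.
  have nC : C != Y by case/imsetP: CP => i iY ->; exact: KneY.
  split; first exact: subset_trans DC CY.
  + apply: contraNneq nC => eD; apply/eqP/eqP; rewrite eqEsubset CY /=.
    by rewrite -eD.
  + case: h => [h|->] //.
    by case: (okC C CP cC) => _ /(_ D h) [].
- move=> D E /src [C1 [C1P c1 D1 h1]] /src [C2 [C2P c2 E2 h2]].
  have [eC|neC] := eqVneq C1 C2.
    subst C2; case: h1 => [h1|->]; last by rewrite E2 /= !orbT.
    case: h2 => [h2|->]; last by rewrite D1 /= orbT.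
    by case: (okC C1 C1P c1) => _ _ /(_ D E h1 h2).
  apply/orP; left; rewrite disjoint_subset; apply/subsetP => x xD.
  rewrite inE; apply: contra (disjK C1 C2 C1P C2P neC x (subsetP D1 x xD)).
  exact: (subsetP E2).
- by exists p, q; split.
move=> i j iY jY ij.
have step C : C \in K @: Y -> (1 < #|C|)%N ->
    \sum_(D : {set T} | (i \in D) && (j \in D)) (WK C D + (D == C)%:R * (mK C - m))
    = ((i \in C) && (j \in C))%:R * (U i j - m).
  move=> CP cC; case: (okC C CP cC) => _ hsup _ _ hrep.
  rewrite big_split /=.
  have [ijC|nijC] := boolP ((i \in C) && (j \in C)).
    case/andP: ijC => iC jC.
    have e1 : \sum_(D : {set T} | (i \in D) && (j \in D)) WK C D = U i j - mK C.
      by rewrite (hrep i j iC jC ij) addrAC subrr add0r.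
    rewrite e1 (bigD1 C) /=; last by rewrite iC jC.
    rewrite eqxx mul1r big1; last by move=> D /andP[_ /negbTE ->]; rewrite mul0r.
    by rewrite addr0 mul1r addrA subrK.
  have e1 : \sum_(D : {set T} | (i \in D) && (j \in D)) WK C D = 0.
    apply: big1 => D /andP[iD jD].
    have [//|WD] := eqVneq (WK C D) 0.
    case: (hsup D WD) => /subsetP DC _ _.
    by rewrite (DC i iD) (DC j jD) in nijC.
  have e2 : \sum_(D : {set T} | (i \in D) && (j \in D))
      (D == C)%:R * (mK C - m) = 0.
    apply: big1 => D /andP[iD jD]; have [eD|ne] := eqVneq D C; last by rewrite mul0r.
    by move: nijC; rewrite -eD iD jD.
  by rewrite e1 e2 addr0 mul0r.
rewrite /W exchange_big /=.
have -> : \sum_(C in K @: Y | (1 < #|C|)%N) \sum_(D : {set T} | (i \in D) && (j \in D))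
     (WK C D + (D == C)%:R * (mK C - m))
   = \sum_(C in K @: Y | (1 < #|C|)%N) ((i \in C) && (j \in C))%:R * (U i j - m).
  by apply: eq_bigr => C /andP[CP cC]; rewrite step.
have [jK|jK] := boolP (j \in K i).
  have KP : K i \in K @: Y by apply: imset_f.
  have cK : (1 < #|K i|)%N by apply/card_gt1P; exists i, j; rewrite Kself.
  rewrite (bigD1 (K i)) /=; last by rewrite KP cK.
  rewrite Kself // jK mul1r big1 ?addr0; first by rewrite addrC subrK.
  move=> C /andP[/andP[CP _] ne].
  have [iC|iC] := boolP (i \in C); last by rewrite mul0r.
  by rewrite (memK i C iY CP iC) eqxx in ne.
rewrite big1 ?addr0.
  apply/eqP; rewrite eq_le mle // andbT.
  by move: jK; rewrite /K inE jY /= eq_sym (negbTE ij) /= leNgt.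
move=> C /andP[CP _]; have [iC|iC] := boolP (i \in C); last by rewrite mul0r.
by rewrite (memK i C iY CP iC) (negbTE jK) andbF mul0r.
Qed.
End Ultra.
Section PhiDef.
Variable R : realType.
Variable n : nat.
Local Notation L := (leaf n).

Definition avec (d : prod_space R n) (i : L) : R :=
  match fintype.split i with
  | inl k => d.1.1 k
  | inr k => d.1.2 k - d.1.1 k + dist d.2 (unbar k) (bar k)
  end.

Definition Mv (d : prod_space R n) (i j : L) : R :=
  avec d i + avec d j - dist d.2 i j.

Definition cst (d : prod_space R n) : R :=
  (\sum_(q : Defs.pair n) Mv d (val q).1 (val q).2) / #|{: Defs.pair n}|%:R.

Definition Phi (d : prod_space R n) : plucker_space R n :=
  [ffun p => Mv d (val p).1 (val p).2 - cst d].

Lemma Mv_sym d i j : Mv d i j = Mv d j i.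
Proof. by rewrite /Mv dist_sym [avec d i + _]addrC. Qed.

Lemma pl_val (mu : plucker_space R n) (p : Defs.pair n) : pl mu (val p).1 (val p).2 = mu p.
Proof.
rewrite /pl; case: insubP => [q _ vq|]; last by rewrite -surjective_pairing (valP p).
by congr (mu _); apply: val_inj; rewrite vq -surjective_pairing.
Qed.

Lemma pl_sym (mu : plucker_space R n) i j : pl mu i j = pl mu j i.
Proof.
rewrite /pl; case: (ltngtP i j) => h.
- have P1 : pair_pred (i, j) := h.
  have F2 : pair_pred (j, i) = false by rewrite /pair_pred /= ltnNge ltnW.
  case: (insubP (Defs.pair n) (i, j)) => [p _ vp|]; last by rewrite P1.
  case: (insubP (Defs.pair n) (j, i)) => [q Pq _|_]; first by rewrite F2 in Pq.
  case: (insubP (Defs.pair n) (i, j)) => [q _ vq|]; last by rewrite P1.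
  by congr (mu _); apply: val_inj; rewrite vp vq.
- have P1 : pair_pred (j, i) := h.
  have F2 : pair_pred (i, j) = false by rewrite /pair_pred /= ltnNge ltnW.
  case: (insubP (Defs.pair n) (i, j)) => [q Pq _|_]; first by rewrite F2 in Pq.
  case: (insubP (Defs.pair n) (j, i)) => [p _ vp|]; last by rewrite P1.
  case: (insubP (Defs.pair n) (j, i)) => [q _ vq|]; last by rewrite P1.
  by congr (mu _); apply: val_inj; rewrite vp vq.
- by rewrite (val_inj h).
Qed.

Lemma pl_Phi d i j : i != j -> pl (Phi d) i j = Mv d i j - cst d.
Proof.
move=> ij.
have [lt|] := boolP (i < j)%N.
  have Pp : pair_pred (i, j) by [].
  by rewrite -[i]/((val (Sub (i, j) Pp : Defs.pair n)).1) -[j]/((val (Sub (i, j) Pp : Defs.pair n)).2)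
    pl_val ffunE.
rewrite -leqNgt leq_eqVlt => /orP[/eqP/val_inj e|lt]; first by rewrite e eqxx in ij.
have Pp : pair_pred (j, i) by [].
rewrite pl_sym Mv_sym.
by rewrite -[i]/((val (Sub (j, i) Pp : Defs.pair n)).2) -[j]/((val (Sub (j, i) Pp : Defs.pair n)).1)
    pl_val ffunE.
Qed.

End PhiDef.

Section PhiLin.
Variable R : realType.
Variable n : nat.
Local Notation L := (leaf n).

Lemma scaleRo (a x : R) : a *: (x : R^o) = a * x.
Proof. by []. Qed.

Lemma dist_lin (a : R) (w w' : {ffun Defs.split n -> R^o}) i j :
  dist (a *: w + w') i j = a * dist w i j + dist w' i j.
Proof. by rewrite /dist mulr_sumr -big_split; apply: eq_bigr => s _; rewrite !ffunE. Qed.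

Lemma avec_lin (a : R) (d e : prod_space R n) i :
  avec (a *: d + e) i = a * avec d i + avec e i.
Proof.
rewrite /avec; case: (fintype.split i) => k /=; rewrite !ffunE ?dist_lin /=.
  by [].
rewrite !scaleRo.
ring.
Qed.

Lemma Mv_lin (a : R) (d e : prod_space R n) i j :
  Mv (a *: d + e) i j = a * Mv d i j + Mv e i j.
Proof. rewrite /Mv !avec_lin dist_lin /=; ring. Qed.

Lemma Phi_lin : linear (@Phi R n).
Proof.
move=> a d e; apply/ffunP => p; rewrite !ffunE /cst Mv_lin.
under eq_bigr do rewrite Mv_lin.
rewrite big_split /= -mulr_sumr.
rewrite ?scaleRo.
ring.
Qed.

End PhiLin.

HB.instance Definition _ (R : realType) (n : nat) :=
  GRing.isLinear.Build R (prod_space R n) (plucker_space R n) *:%R (@Phi R n) (@Phi_lin R n).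
Section Forward.
Variable R : realType.
Variable n : nat.
Local Notation L := (leaf n).

Lemma avec_unbar (d : prod_space R n) k : avec d (unbar k) = d.1.1 k.
Proof. by rewrite /avec /unbar -[lshift n k]/(unsplit (inl k)) unsplitK. Qed.

Lemma avec_bar (d : prod_space R n) k :
  avec d (bar k) = d.1.2 k - d.1.1 k + dist d.2 (unbar k) (bar k).
Proof. by rewrite /avec /bar -[rshift n k]/(unsplit (inr k)) unsplitK. Qed.

Lemma unbar_bar (k : 'I_n) : unbar k != bar k.
Proof. by rewrite -val_eqE /= neq_ltn ltn_addr. Qed.

Lemma mt3_max (K x y z : R) :
  [\/ y = z /\ x <= y, x = z /\ y <= x | x = y /\ z <= x] ->
  min_twice3 (K - x) (K - y) (K - z).
Proof.
pose o0 := @Ordinal 3 0 isT; pose o1 := @Ordinal 3 1 isT; pose o2 := @Ordinal 3 2 isT.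
rewrite /min_twice3 /min_twice.
case=> [[e le]|[e le]|[e le]];
  [exists o1, o2|exists o0, o2|exists o0, o1]; (split; first by []);
  split; (move=> [[|[|[|m]]] Hm] /=; last by rewrite !ltnS ltn0 in Hm);
  move: le; rewrite ?e ?lerD2l ?lerN2 ?lexx //.
Qed.

Lemma min_twice_shift (I : finType) (f : I -> R) c :
  min_twice f -> min_twice (fun i => f i - c).
Proof.
case=> i [j [ij [hi hj]]]; exists i, j; split => //.
by split => k; rewrite lerD2r.
Qed.

Lemma card_pair_gt0 : (0 < n)%N -> (0 < #|{: Defs.pair n}|)%N.
Proof.
move=> n0; apply/card_gt0P.
have P : pair_pred (unbar (Ordinal n0), bar (Ordinal n0)).
  by rewrite /pair_pred /= ltn_addr.
by exists (Sub _ P).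
Qed.

Lemma Phi_norm (d : prod_space R n) : (0 < n)%N -> normalized (Phi d).
Proof.
move=> n0; rewrite /normalized.
under eq_bigr do rewrite ffunE.
rewrite sumrB sumr_const -[X in _ - X]mulr_natr /cst.
rewrite divfK ?subrr // pnatr_eq0 -lt0n.
exact: card_pair_gt0.
Qed.


Lemma ord_neq (i j : L) : (i < j)%N -> i != j.
Proof. by move=> h; rewrite -val_eqE /= neq_ltn h. Qed.

Lemma pl_Phi_diag (d : prod_space R n) k :
  pl (Phi d) (unbar k) (bar k) = d.1.2 k - cst d.
Proof.
rewrite pl_Phi ?unbar_bar // /Mv avec_unbar avec_bar.
change (d.1.1 k + (d.1.2 k - d.1.1 k + dist d.2 (unbar k) (bar k)) -
   dist d.2 (unbar k) (bar k) - cst d = d.1.2 k - cst d).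
ring.
Qed.

Lemma Phi_TSpGr (d : prod_space R n) : (0 < n)%N -> prod_support d -> TSpGr (Phi d).
Proof.
move=> n0 [[xn xmt] [tw0 twc]].
split; first exact: Phi_norm.
split.
- move=> i j k l ij jk kl.
  have ik := ltn_trans ij jk; have jl := ltn_trans jk kl; have il := ltn_trans ik kl.
  rewrite !pl_Phi ?ord_neq //.
  set K := avec d i + avec d j + avec d k + avec d l - (cst d + cst d).
  have -> : Mv d i j - cst d + (Mv d k l - cst d) = K - v1 d.2 i j k l.
    by rewrite /Mv /v1 /K; ring.
  have -> : Mv d i k - cst d + (Mv d j l - cst d) = K - v2 d.2 i j k l.
    by rewrite /Mv /v2 /K; ring.
  have -> : Mv d i l - cst d + (Mv d j k - cst d) = K - v3 d.2 i j k l.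
    by rewrite /Mv /v3 /K; ring.
  apply: mt3_max; exact: (four_point tw0 twc).
- case: (min_twice_shift (cst d) xmt) => a [b [ab [ha hb]]].
  exists a, b; rewrite !pl_Phi_diag; split => //; split => k; rewrite pl_Phi_diag.
    exact: ha.
  exact: hb.
Qed.

End Forward.
Section Inj.
Variable R : realType.
Variable n : nat.
Local Notation L := (leaf n).

Lemma vdiff (d : prod_space R n) a1 a2 b1 b2 :
  v2 d.2 a1 a2 b1 b2 - v1 d.2 a1 a2 b1 b2 =
  Mv d a1 a2 + Mv d b1 b2 - Mv d a1 b1 - Mv d a2 b2.
Proof. rewrite /Mv /v1 /v2; ring. Qed.

Lemma three_leaves (x : L) : (1 < n)%N ->
  exists y z, [/\ y != x, z != x & y != z].
Proof.
move=> n1; have : (1 < #|[set~ x]|)%N.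
  rewrite cardsC1 card_ord; lia.
case/card_gt1P => y [z [yx zx yz]]; exists y, z.
by move: yx zx; rewrite !inE => -> ->.
Qed.

Lemma Phi_inj (d e : prod_space R n) : (1 < n)%N ->
  prod_support d -> prod_support e -> Phi d = Phi e -> d = e.
Proof.
move=> n1 [[xnd _] [dw0 dwc]] [[xne _] [ew0 ewc]] He.
set k := cst d - cst e.
have hM x y : x != y -> Mv d x y = Mv e x y + k.
  move=> xy; have := pl_Phi d xy; rewrite He pl_Phi // => h.
  rewrite /k; lra.
have ew : e.2 = d.2.
  apply: (w_unique ew0 ewc dw0 dwc) => a1 a2 b1 b2 h12 h34 h13 h14 h23 h24.
  rewrite !vdiff !hM //.
  ring.
have hA x y : x != y -> avec d x + avec d y = avec e x + avec e y + k.
  move=> xy; have := hM x y xy; rewrite /Mv ew => h.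
  lra.
have hd x : avec d x - avec e x = k / 2.
  have [y [z [yx zx yz]]] := three_leaves x n1.
  have xy : x != y by rewrite eq_sym.
  have xz : x != z by rewrite eq_sym.
  have h1 := hA x y xy; have h2 := hA x z xz; have h3 := hA y z yz.
  lra.
have xi i : d.1.2 i - e.1.2 i = k.
  have := hd (unbar i); have := hd (bar i).
  rewrite !avec_unbar !avec_bar ew; lra.
have k0 : k = 0.
  have : \sum_(i : 'I_n) (d.1.2 i - e.1.2 i) = \sum_(i : 'I_n) k.
    by apply: eq_bigr => i _; rewrite xi.
  rewrite sumrB xnd xne subrr sumr_const card_ord => /esym/eqP.
  rewrite mulrn_eq0 => /orP[/eqP n0|/eqP //].
  by rewrite n0 in n1.
have e1 : d.1.1 = e.1.1.
  apply/ffunP => i; have := hd (unbar i); rewrite !avec_unbar k0; lra.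
have e2 : d.1.2 = e.1.2.
  apply/ffunP => i; have := xi i; rewrite k0; lra.
by rewrite [d]surjective_pairing [d.1]surjective_pairing e1 e2 -ew
  -surjective_pairing -surjective_pairing.
Qed.
End Inj.
Section Surj1.
Variable R : realType.

Lemma mt3_le (a b c : R) : min_twice3 a b c ->
  [/\ (b <= a) || (c <= a), (a <= b) || (c <= b) & (a <= c) || (b <= c)].
Proof.
case=> i [j [ij [hi hj]]].
have := hi (@Ordinal 3 0 isT); have := hi (@Ordinal 3 1 isT); have := hi (@Ordinal 3 2 isT).
have := hj (@Ordinal 3 0 isT); have := hj (@Ordinal 3 1 isT); have := hj (@Ordinal 3 2 isT).
case: i ij hi hj => [[|[|[|m]]] Hi] //; case: j => [[|[|[|m']]] Hj] //= ij _ _;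
  move=> h1 h2 h3 h4 h5 h6;
  split; apply/orP; first [by left | by right].
Qed.

Lemma mt3_le_shift (S x y z : R) : min_twice3 (S + x) (S + y) (S + z) ->
  [/\ (y <= x) || (z <= x), (x <= y) || (z <= y) & (x <= z) || (y <= z)].
Proof. by case/mt3_le; rewrite !lerD2l. Qed.

Lemma leafP n (x : leaf n) : (exists k, x = unbar k) \/ (exists k, x = bar k).
Proof.
case: (fintype.splitP x) => k e; [left|right]; exists k; apply: val_inj; exact: e.
Qed.

Lemma sep_C n (s : Defs.split n) C i j : C \in val s ->
  sep s i j = ((i \in C) != (j \in C)).
Proof.
rewrite sepE in_val => /orP[]/eqP->; rewrite ?inE //.
by case: (i \in side s); case: (j \in side s).
Qed.

Lemma compat_of_sets n (s t : Defs.split n) X Y : X \in val s -> Y \in val t ->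
  [\/ X :&: Y = set0, X :&: ~: Y = set0, ~: X :&: Y = set0 | ~: X :&: ~: Y = set0] ->
  compatible s t.
Proof.
move=> Xs Yt h; apply/existsP.
have Xs' := in_valC Xs; have Yt' := in_valC Yt.
case: h => e.
- by exists X; rewrite Xs /=; apply/existsP; exists Y; rewrite Yt e /=.
- by exists X; rewrite Xs /=; apply/existsP; exists (~: Y); rewrite Yt' e /=.
- by exists (~: X); rewrite Xs' /=; apply/existsP; exists Y; rewrite Yt e /=.
- by exists (~: X); rewrite Xs' /=; apply/existsP; exists (~: Y); rewrite Yt' e /=.
Qed.

End Surj1.
Section SumSplits.
Variable R : realType.
Variable n : nat.
Local Notation L := (leaf n).
Implicit Types s t : Defs.split n.
Variable r : L.

Definition sd s : {set L} := if r \in side s then ~: side s else side s.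

Lemma sd_r s : r \notin sd s.
Proof. by rewrite /sd; case: ifP => h; rewrite ?inE h. Qed.

Lemma val_sd s C : (C \in val s) && (r \notin C) = (C == sd s).
Proof.
rewrite in_val /sd; case: ifP => rS; apply/andP/eqP.
- by case=> /orP[]/eqP-> //; rewrite rS.
- by move=> ->; rewrite eqxx orbT inE rS.
- by case=> /orP[]/eqP-> //; rewrite inE rS.
- by move=> ->; rewrite eqxx rS.
Qed.

Definition valid (C : {set L}) := [&& r \notin C, (1 < #|C|)%N & (1 < #|~: C|)%N].

Lemma valid_split C : valid C -> is_split [set C; ~: C].
Proof. by case/and3P=> _ c1 c2; apply/existsP; exists C; rewrite eqxx c1 c2. Qed.

Definition sC C (h : valid C) : Defs.split n := Sub _ (valid_split h).

Lemma sd_sC C (h : valid C) : sd (sC h) = C.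
Proof.
apply/esym/eqP; rewrite -val_sd /sC /= !inE eqxx /=.
by case/and3P: h.
Qed.

Lemma sd_uniq s C (h : valid C) : sd s = C -> s = sC h.
Proof.
move=> e; apply: val_inj; rewrite /sC /=.
case: (sideP s) => -> _ _; move: e; rewrite /sd; case: ifP => _ <-.
  by rewrite setCK setUC.
by [].
Qed.

Lemma sum_splits (g : {set L} -> R) :
  (forall C, g C != 0 -> r \notin C -> valid C) ->
  \sum_(s : Defs.split n) \sum_(C : {set L} | (C \in val s) && (r \notin C)) g C
  = \sum_(C : {set L} | r \notin C) g C.
Proof.
move=> hg.
have e1 s : \sum_(C : {set L} | (C \in val s) && (r \notin C)) g C = g (sd s).
  by apply: big_pred1 => C; rewrite /= val_sd.
rewrite (eq_bigr (fun s => g (sd s))); last by move=> s _; exact: e1.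
rewrite (partition_big sd (fun C => r \notin C)) /=; last by move=> s _; exact: sd_r.
apply: eq_bigr => C rC.
have [vC|nvC] := boolP (valid C).
  rewrite (big_pred1 (sC vC)) ?sd_sC // => s /=.
  by apply/eqP/eqP => [e|->]; [exact: sd_uniq | exact: sd_sC].
have gC : g C = 0 by apply/eqP; apply: contraNT nvC => h; exact: hg.
by rewrite gC big1 // => s /eqP ->.
Qed.

End SumSplits.
Section Surj.
Variable R : realType.
Variable n : nat.
Hypothesis n1 : (1 < n)%N.
Local Notation L := (leaf n).
Implicit Types s t : Defs.split n.
Variable mu : plucker_space R n.
Hypothesis Hmu : TSpGr mu.

Lemma r_pf : (0 < n + n)%N. Proof. by rewrite addn_gt0 (ltnW n1). Qed.
Definition r : L := Ordinal r_pf.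

Definition U (i j : L) : R := pl mu i j - pl mu i r - pl mu j r.
Lemma Usym i j : U i j = U j i.
Proof. by rewrite /U (pl_sym mu i j); ring. Qed.

Lemma Usorted (a b c : L) : (0 < a)%N -> (a < b)%N -> (b < c)%N ->
  [/\ (U a c <= U a b) || (U b c <= U a b), (U a b <= U a c) || (U b c <= U a c)
    & (U a b <= U b c) || (U a c <= U b c)].
Proof.
move=> a0 ab bc; case: Hmu => _ [fp _].
have := fp r a b c a0 ab bc.
set S := pl mu a r + pl mu b r + pl mu c r.
have -> : pl mu r a + pl mu b c = S + U b c by rewrite /U /S (pl_sym mu r a); ring.
have -> : pl mu r b + pl mu a c = S + U a c by rewrite /U /S (pl_sym mu r b); ring.
have -> : pl mu r c + pl mu a b = S + U a b by rewrite /U /S (pl_sym mu r c); ring.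
by case/mt3_le_shift => h1 h2 h3; split; rewrite orbC.
Qed.

Lemma Uultra : ultra U [set~ r].
Proof.
move=> i j k; rewrite !inE => ir jr kr ij jk ik; rewrite ge_min.
have pos x : x != r -> (0 < x)%N.
  by move=> xr; rewrite lt0n; apply: contra xr => /eqP h; apply/eqP/val_inj.
wlog lij : i j ir jr ij jk ik / (i < j)%N.
  move=> H; case: (ltngtP i j) => [l|l|e]; first exact: H.
  - by rewrite orbC (Usym i j); apply: H => //; rewrite eq_sym.
  - by move: ij; rewrite (ord_inj e) eqxx.
case: (ltngtP j k) => [jk'|kj|e]; last by move: jk; rewrite (ord_inj e) eqxx.
  by case: (Usorted (pos i ir) lij jk').
case: (ltngtP i k) => [ik'|ki|e]; last by move: ik; rewrite (ord_inj e) eqxx.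
  by case: (Usorted (pos i ir) ik' kj) => _ h _; rewrite (Usym j k).
by case: (Usorted (pos k kr) ki lij) => _ _ h; rewrite (Usym i k) (Usym j k).
Qed.


Lemma Phi_surj : exists d : prod_space R n, prod_support d /\ Phi d = mu.
Proof.
have cY : (1 < #|[set~ r]|)%N by rewrite cardsC1 card_ord; lia.
have [m [W [hW0 hWsub hWlam _ hWrep]]] := ultra_rep Usym Uultra cY.
have Wr C : W C != 0 -> r \notin C.
  move=> h; case: (hWsub C h) => /subsetP sub _ _; apply/negP => rC.
  by move: (sub r rC); rewrite !inE eqxx.
have Wvalid C : W C != 0 -> valid r C.
  move=> h; case: (hWsub C h) => sub ne c1.
  have lt : (#|C| < #|[set~ r]|)%N by apply: proper_card; rewrite properEneq ne sub.
  move: lt; rewrite cardsC1 card_ord => lt.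
  have := cardsC C; rewrite card_ord => e.
  rewrite /valid Wr // c1 /= -(ltn_add2l #|C|) e; lia.
pose w : {ffun Defs.split n -> R} :=
  [ffun s : Defs.split n => \sum_(C : {set L} | (C \in val s) && (r \notin C)) W C / 2].
have hw0 s : 0 <= w s.
  by rewrite ffunE; apply: sumr_ge0 => C _; apply: divr_ge0.
have hwc s t : w s != 0 -> w t != 0 -> compatible s t.
  rewrite !ffunE => /sum_neq0 [C /andP[/andP[Cs rC] hC]] /sum_neq0 [D /andP[/andP[Dt rD] hD]].
  have hC' : W C != 0 by apply: contraNneq hC => ->; rewrite mul0r.
  have hD' : W D != 0 by apply: contraNneq hD => ->; rewrite mul0r.
  apply: (compat_of_sets Cs Dt).
  case/or3P: (hWlam C D hC' hD') => h.
  - by constructor 1; exact: disjoint_setI0.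
  - by constructor 2; apply/eqP; rewrite -setDE setD_eq0.
  - by constructor 3; apply/eqP; rewrite setIC -setDE setD_eq0.
pose Pp i := \sum_(C : {set L}) (i \in C)%:R * W C.
pose Qq i j := \sum_(C : {set L}) ((i \in C) && (j \in C))%:R * W C.
have distF i j : dist w i j = \sum_(C : {set L}) ((i \in C) != (j \in C))%:R * W C / 2.
  rewrite distE.
  rewrite (eq_bigr (fun s => \sum_(C : {set L} | (C \in val s) && (r \notin C))
      ((i \in C) != (j \in C))%:R * W C / 2)); last first.
    move=> s _; rewrite ffunE mulr_suml; apply: eq_bigr => C /andP[Cs _].
    by rewrite (sep_C i j Cs) mulrC mulrA.
  rewrite sum_splits; last first.
    move=> C h _; apply: Wvalid; apply: contraNneq h => ->; rewrite mulr0 mul0r.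
    by [].
  rewrite [RHS](bigID (fun C : {set L} => r \notin C)) /= [X in _ = _ + X]big1 ?addr0 //.
  move=> C; rewrite negbK => rC.
  have -> : W C = 0 by apply/eqP; apply: contraLR rC => /Wr.
  by rewrite mulr0 mul0r.
have distPQ i j : dist w i j = (Pp i + Pp j) / 2 - Qq i j.
  rewrite distF /Pp /Qq -big_split /= mulr_suml -sumrB; apply: eq_bigr => C _.
  by case: (i \in C); case: (j \in C); rewrite /=; lra.
have Pr : Pp r = 0.
  apply: big1 => C _; have [rC|nrC] := boolP (r \in C); last by rewrite /= mul0r.
  have -> : W C = 0 by apply/eqP; apply: contraLR rC => /Wr.
  by rewrite mulr0.
have Qr i : Qq i r = 0.
  apply: big1 => C _; have [rC|nrC] := boolP (r \in C); last by rewrite andbF /= mul0r.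
  have -> : W C = 0 by apply/eqP; apply: contraLR rC => /Wr.
  by rewrite mulr0.
have Qr' j : Qq r j = 0.
  apply: big1 => C _; have [rC|nrC] := boolP (r \in C); last by rewrite /= mul0r.
  have -> : W C = 0 by apply/eqP; apply: contraLR rC => /Wr.
  by rewrite mulr0.
have UQ i j : i != r -> j != r -> i != j -> U i j = m + Qq i j.
  move=> ir jr ij; rewrite hWrep ?inE //; congr (_ + _).
  rewrite big_mkcond /Qq; apply: eq_bigr => C _.
  by case: ((i \in C) && (j \in C)); rewrite ?mul1r ?mul0r.
pose a i := if i == r then - m / 2 else pl mu i r + m / 2 + Pp i / 2.
have arep i j : i != j -> pl mu i j = a i + a j - dist w i j.
  move=> ij; rewrite distPQ /a.
  have [ir|ir] := eqVneq i r; have [jr|jr] := eqVneq j r.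
  - by rewrite ir jr eqxx in ij.
  - rewrite ir /= ?eqxx ?(negbTE jr) Pr Qr' (pl_sym mu r j); lra.
  - rewrite jr /= ?eqxx ?(negbTE ir) Pr Qr; lra.
  - have := UQ i j ir jr ij; rewrite /U /= ?(negbTE ir) ?(negbTE jr) => h; lra.
case: Hmu => nmu [_ mtmu].
pose y k := pl mu (unbar k) (bar k).
pose tt := (\sum_(k : 'I_n) y k) / n%:R.
pose a' x := a x - tt / 2.
pose d : prod_space R n := ([ffun k => a' (unbar k)], [ffun k => y k - tt], w).
have n0 : (n%:R : R) != 0 by rewrite pnatr_eq0 -lt0n (ltnW n1).
have avec_d x : avec d x = a' x.
  case: (leafP x) => [[k ->]|[k ->]].
    by rewrite avec_unbar ffunE.
  rewrite avec_bar !ffunE /=.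
  have := arep (unbar k) (bar k) (unbar_bar k); rewrite /y /a' => h.
  rewrite h; lra.
have Mv_d x z : x != z -> Mv d x z = pl mu x z - tt.
  by move=> xz; rewrite /Mv !avec_d (arep x z xz) /= /a'; lra.
exists d; split.
  split; split.
  - rewrite /normalized; under eq_bigr do rewrite ffunE.
    by rewrite sumrB sumr_const card_ord -[X in _ - X]mulr_natr /tt divfK // subrr.
  - case: (min_twice_shift tt mtmu) => i [j [ij [hi hj]]]; exists i, j.
    rewrite !ffunE; split => //; split => k; rewrite ffunE; [exact: hi | exact: hj].
  - exact: hw0.
  - exact: hwc.
have Np : (#|{: Defs.pair n}|%:R : R) != 0.
  by rewrite pnatr_eq0 -lt0n card_pair_gt0 // (ltnW n1).
have cd : cst d = - tt.
  rewrite /cst (eq_bigr (fun q => mu q - tt)); last first.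
    by move=> q _; rewrite Mv_d ?pl_val //; exact: ord_neq (valP q).
  rewrite sumrB sumr_const -[X in _ - X]mulr_natr.
  by rewrite nmu sub0r mulNr mulfK.
apply/ffunP => p; rewrite ffunE Mv_d; last exact: ord_neq (valP p).
rewrite pl_val cd; lra.
Qed.

End Surj.
Theorem proposition5p1 (R : realType) (n : nat) :
  (2 <= n)%N ->
  exists Phi : prod_space R n -> plucker_space R n, fan_iso_onto_TSpGr Phi.
Proof.
move=> n2; exists (@Phi R n); split; [|split; [|split]].
- by move=> d hd; apply: Phi_TSpGr => //; apply: leq_trans n2.
- by move=> mu hmu; exact: Phi_surj.
- by move=> d e hd he; exact: Phi_inj.
- move=> S sigma _ _.
  exists (GRing.Linear.clone _ _ _ _ (@Phi R n) _).
  by [].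
Qed.
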